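(* Let $G$ be a connected graph of order $n\geq 3$. If $\operatorname{diam}(G)=2$, then $prc(G)=\chi'(G)$.
   Context: A path in an edge-coloured graph is a rainbow path if its edges receive pairwise distinct colours. The proper rainbow connection number $prc(G)$ of a nontrivial connected graph is the minimum number of colours in a proper edge-colouring (adjacent edges get distinct colours) such that every two distinct vertices are joined by a rainbow path. $\chi'(G)$ is the chromatic index of $G$. *)

(* Defs.v *)
From mathcomp Require Import all_boot.
Set Implicit Arguments. Unset Strict Implicit. Unset Printing Implicit Defensive.

Definition simple_graph (T : finType) (e : rel T) : Prop :=
  irreflexive e /\ symmetric e.

Definition connected_graph (T : finType) (e : rel T) : Prop :=
  forall x y : T, connect e x y.

(* A walk x = x0, x1, .., xd
   is represented as x together with the sequence p = [:: x1; ...; xd]. *)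
Definition is_dist (T : finType) (e : rel T) (x y : T) (d : nat) : Prop :=
  (exists p : seq T, [/\ path e x p, last x p = y & size p = d]) /\
  (forall p : seq T, path e x p -> last x p = y -> d <= size p).

Definition diameter_is (T : finType) (e : rel T) (D : nat) : Prop :=
  (forall x y : T, exists2 d, is_dist e x y d & d <= D) /\
  (exists x y : T, is_dist e x y D).

(* An edge colouring is a function c : T -> T -> nat; only its values on edges
   matter. *)
Definition proper_edge_colouring (T : finType) (e : rel T) (k : nat)
    (c : T -> T -> nat) : Prop :=
  [/\ (forall x y, e x y -> c x y = c y x),
      (forall x y, e x y -> c x y < k) &
      (forall x y z, e x y -> e x z -> y != z -> c x y != c x z)].

(* A rainbow path from x to y: a path (no repeated vertices) whose edge
   colours are pairwise distinct. pairmap c x p lists the colours of the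
   consecutive edges of the path x :: p. *)
Definition rainbow_path (T : finType) (e : rel T) (c : T -> T -> nat)
    (x y : T) (p : seq T) : Prop :=
  [/\ path e x p, last x p = y, uniq (x :: p) & uniq (pairmap c x p)].

Definition proper_rainbow_connected (T : finType) (e : rel T) (k : nat)
    (c : T -> T -> nat) : Prop :=
  proper_edge_colouring e k c /\
  (forall x y : T, x != y -> exists p, rainbow_path e c x y p).

Definition chromatic_index_is (T : finType) (e : rel T) (k : nat) : Prop :=
  (exists c, proper_edge_colouring e k c) /\
  (forall j c, proper_edge_colouring e j c -> k <= j).

Definition prc_is (T : finType) (e : rel T) (k : nat) : Prop :=
  (exists c, proper_rainbow_connected e k c) /\
  (forall j c, proper_rainbow_connected e j c -> k <= j).

(* Main.v *)
Require Import Defs.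
From mathcomp Require Import all_boot.

Lemma proper_rc (T : finType) (e : rel T) j c :
  simple_graph e -> diameter_is e 2 ->
  proper_edge_colouring e j c -> proper_rainbow_connected e j c.
Proof.
move=> [irr sym] [Hd _] Hc; split => // x y xy.
have [Hs _ Hp] := Hc.
have [d [[p [pp lp sp]] _] dle] := Hd x y.
case: p pp lp sp => [|a [|b [|? ?]]] //= pp lp sp.
- by move: xy; rewrite lp eqxx.
- move: pp; rewrite andbT => exa; subst y.
  exists [:: a]; split => //=; first by rewrite exa.
  by rewrite inE andbT.
- move: pp => /andP [exa /andP [eab _]]; subst y.
  have xa : x != a by apply/eqP => E; move: exa; rewrite E irr.
  have ay : a != b by apply/eqP => E; move: eab; rewrite E irr.
  exists [:: a; b]; split => //=.
  + by rewrite exa eab.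
  + by rewrite !inE negb_or xa xy /= ay.
  + rewrite inE andbT Hs //.
    apply: Hp => //.
    by rewrite sym.
- by move: dle; rewrite -sp.
Qed.

Theorem proposition5p1 (T : finType) (e : rel T) :
  simple_graph e -> connected_graph e -> 3 <= #|T| -> diameter_is e 2 ->
  forall k : nat, chromatic_index_is e k <-> prc_is e k.
Proof.
move=> Hs _ _ Hd k; split.
- move=> [[c Hc] Hm]; split; first by exists c; apply: proper_rc.
  by move=> j c' [Hc' _]; exact: (Hm j c' Hc').
- move=> [[c [Hc _]] Hm]; split; first by exists c.
  by move=> j c' Hc'; apply: (Hm j c'); exact: proper_rc.
Qed.
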